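(* Let $k$ be a field of characteristic $0$ and $A$ a $k$-vector space. Then $S_{\le r}A=\bigoplus_{0\le i\le r}S^iA$ for every $r\ge0$.
   Context: $SA=\bigoplus_{n\ge0}S^nA$ is the symmetric algebra of $A$ ($S^0A=k$, $S^nA$ the $n$-th symmetric power, with pure symmetric tensors $a_1\otimes_s\dots\otimes_s a_n$). The linear map $\partial\colon SA\to SA\otimes A$ is given by $\partial(\lambda)=0$ for $\lambda\in S^0A$ and $\partial(a_1\otimes_s\dots\otimes_s a_n)=\sum_{i=1}^n(a_1\otimes_s\dots\otimes_s a_{i-1}\otimes_s a_{i+1}\otimes_s\dots\otimes_s a_n)\otimes a_i$. Iterates: $\partial^0=1_{SA}$ and $\partial^{r+1}:=\partial;(\partial^r\otimes 1_A)\colon SA\to SA\otimes A^{\otimes(r+1)}$. Define $S_{\le r}A:=\ker(\partial^{r+1})\subseteq SA$. *)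

(* Defs.v *)
From HB Require Import structures.
From mathcomp Require Import all_boot all_order all_algebra.
From mathcomp Require Import finmap.
From mathcomp.multinomials Require Import monalg.
From Stdlib Require Import ClassicalEpsilon.

Set Implicit Arguments.
Unset Strict Implicit.
Unset Printing Implicit Defensive.

Import GRing.Theory.
Local Open Scope ring_scope.

Definition lext (k : fieldType) (K : choiceType) (V : lmodType k)
  (h : K -> V) (g : {malg k[K]}) : V :=
  \sum_(x <- msupp g) g@_x *: h x.

Definition span (k : fieldType) (V : lmodType k) (G : V -> Prop) : V -> Prop :=
  fun x => exists s : seq (k * V),
    (forall p, p \in s -> G p.2) /\ x = \sum_(p <- s) p.1 *: p.2.

Definition coset (k : fieldType) (V : lmodType k) (W : V -> Prop) (x : V)
  : V -> Prop := fun y => W (y - x).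

Definition quot (k : fieldType) (V : lmodType k) (W : V -> Prop) : Type :=
  {C : V -> Prop | exists x, C = coset W x}.

Definition qpi (k : fieldType) (V : lmodType k) (W : V -> Prop) (x : V)
  : quot W := exist _ (coset W x) (ex_intro _ x erefl).

Definition qrepr (k : fieldType) (V : lmodType k) (W : V -> Prop)
  (C : quot W) : V :=
  proj1_sig (constructive_indefinite_description _ (proj2_sig C)).

Definition remove_at (T : Type) (i : nat) (w : seq T) : seq T :=
  take i w ++ drop i.+1 w.

(* generator of the word w stands for a_1 (x)_s ... (x)_s a_n.          *)
Definition FS (k : fieldType) (A : lmodType k) := {malg k[seq A]}.
Definition gS (k : fieldType) (A : lmodType k) (w : seq A) : FS A := << w >>.

(* The generator stands for (w_1 (x)_s ... (x)_s w_n) (x) t_1 (x)...(x) t_m. *)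
Definition FT (k : fieldType) (A : lmodType k) (m : nat) :=
  {malg k[(seq A * m.-tuple A)%type]}.
Definition gT (k : fieldType) (A : lmodType k) (m : nat) (w t : seq A)
  : FT A m :=
  match (insub t : option (m.-tuple A)) with
  | Some u => << (w, u) >>
  | None => 0
  end.

Definition multilin (k : fieldType) (A : lmodType k) (V : lmodType k)
  (g : seq A -> V) : V -> Prop := fun x =>
  exists (u v : seq A) (a b : A) (c : k),
    x = g (u ++ (c *: a + b) :: v) - c *: g (u ++ a :: v) - g (u ++ b :: v).

(* Relations defining SA = (+)_n S^n A: multilinearity and symmetry. *)
Definition RelS (k : fieldType) (A : lmodType k) : FS A -> Prop :=
  span (fun x => multilin (@gS k A) x \/
                 exists s s' : seq A, perm_eq s s' /\ x = gS s - gS s').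

(* Relations defining SA (x) A^{(x) m}: multilinearity in every slot and *)
(* symmetry in the SA-part.                                              *)
Definition RelT (k : fieldType) (A : lmodType k) (m : nat) : FT A m -> Prop :=
  span (fun x => (exists t, multilin (fun w => gT m w t) x)
              \/ (exists w, multilin (fun t => gT m w t) x)
              \/ exists (s s' t : seq A), perm_eq s s' /\
                                          x = gT m s t - gT m s' t).

Definition SA (k : fieldType) (A : lmodType k) := quot (@RelS k A).
Definition SAT (k : fieldType) (A : lmodType k) (m : nat) := quot (@RelT k A m).

Definition Sn (k : fieldType) (A : lmodType k) (n : nat) : SA A -> Prop :=
  fun C => exists x, span (fun y => exists w : seq A, size w = n /\ y = gS w) x
                     /\ C = qpi (@RelS k A) x.

Definition dfree (k : fieldType) (A : lmodType k) : FS A -> FT A 1 :=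
  lext (fun w : seq A =>
          \sum_(i < size w) gT 1 (remove_at i w) [:: nth 0 w i]).

Definition tens_right (k : fieldType) (A : lmodType k) (m : nat) (a : A)
  : FT A m -> FT A m.+1 :=
  lext (fun p : seq A * m.-tuple A => gT m.+1 p.1 (rcons (val p.2) a)).

(* partial^0 = 1_SA (SA identified with SA (x) A^{(x) 0}),
   partial^{r+1} = partial ; (partial^r (x) 1_A) *)
Fixpoint dpow (k : fieldType) (A : lmodType k) (r : nat) : FS A -> FT A r :=
  match r with
  | 0 => lext (fun w : seq A => gT 0 w [::])
  | r'.+1 => fun x =>
      lext (fun p : seq A * 1.-tuple A =>
              tens_right (thead p.2) (dpow r' (gS p.1))) (dfree x)
  end.

Definition partial_pow (k : fieldType) (A : lmodType k) (r : nat)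
  (C : SA A) : SAT A r :=
  qpi (@RelT k A r) (dpow r (qrepr C)).

Definition S_le (k : fieldType) (A : lmodType k) (r : nat) : SA A -> Prop :=
  fun C => partial_pow r.+1 C = qpi (@RelT k A r.+1) 0.

Definition S_sum (k : fieldType) (A : lmodType k) (r : nat) : SA A -> Prop :=
  fun C => exists x : 'I_r.+1 -> FS A,
    (forall i : 'I_r.+1, Sn i (qpi (@RelS k A) (x i))) /\
    C = qpi (@RelS k A) (\sum_(i < r.+1) x i).

(* Main.v *)
Require Import Defs.
From HB Require Import structures.
From mathcomp Require Import all_boot all_order all_algebra.
From mathcomp Require Import finmap.
From mathcomp.multinomials Require Import monalg.
From Stdlib Require Import ClassicalEpsilon FunctionalExtensionality PropExtensionality ProofIrrelevance.
Set Implicit Arguments.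
Unset Strict Implicit.
Unset Printing Implicit Defensive.
Import GRing.Theory.
Local Open Scope fset_scope.
Local Open Scope ring_scope.

Definition lin (k : fieldType) (V W : lmodType k) (F : V -> W) :=
  forall a x y, F (a *: x + y) = a *: F x + F y.

Section Lin.
Variables (k : fieldType) (V W : lmodType k) (F : V -> W) (HF : lin F).
Lemma lin0 : F 0 = 0.
Proof.
have e := HF 1 0 0; rewrite scaler0 addr0 scale1r in e.
by apply: (addrI (F 0)); rewrite addr0 -e.
Qed.
Lemma linD x y : F (x + y) = F x + F y.
Proof. by have := HF 1 x y; rewrite !scale1r. Qed.
Lemma linZ a x : F (a *: x) = a *: F x.
Proof. by have := HF a x 0; rewrite !addr0 lin0 addr0. Qed.
Lemma linN x : F (- x) = - F x.
Proof. by rewrite -scaleN1r linZ scaleN1r. Qed.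
Lemma linB x y : F (x - y) = F x - F y.
Proof. by rewrite linD linN. Qed.
Lemma lin_sum (I : Type) (s : seq I) (P : pred I) (G : I -> V) :
  F (\sum_(i <- s | P i) G i) = \sum_(i <- s | P i) F (G i).
Proof.
elim: s => [|x s IH]; first by rewrite !big_nil lin0.
by rewrite !big_cons; case: (P x); rewrite ?linD IH.
Qed.
End Lin.

Lemma lin_comp (k : fieldType) (U V W : lmodType k) (F : V -> W) (G : U -> V) :
  lin F -> lin G -> lin (fun x => F (G x)).
Proof. by move=> HF HG a x y; rewrite HG HF. Qed.

Section Lext.
Variables (k : fieldType) (K : choiceType) (V : lmodType k).
Implicit Types (h : K -> V) (g : {malg k[K]}).

Lemma lextEw h (d : {fset K}) g : msupp g `<=` d ->
  lext h g = \sum_(x <- d) g@_x *: h x.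
Proof.
move=> le; rewrite /lext [LHS](big_fset_incl _ le) => //= x xd /mcoeff_outdom ->.
by rewrite scale0r.
Qed.

Lemma lext_lin h : lin (lext h).
Proof.
move=> a g1 g2.
have le1 : msupp g1 `<=` msupp g1 `|` msupp g2 `|` msupp (a *: g1 + g2).
  by rewrite -fsetUA fsubsetUl.
have le2 : msupp g2 `<=` msupp g1 `|` msupp g2 `|` msupp (a *: g1 + g2).
  by rewrite -fsetUA fsubsetU // fsubsetUl orbT.
have le3 : msupp (a *: g1 + g2) `<=` msupp g1 `|` msupp g2 `|` msupp (a *: g1 + g2).
  by rewrite fsubsetUr.
rewrite (lextEw h le1) (lextEw h le2) (lextEw h le3) scaler_sumr -big_split /=.
apply: eq_bigr => x _; by rewrite mcoeffD mcoeffZ scalerDl scalerA.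
Qed.

Lemma lextU h x : lext h << x >> = h x.
Proof. by rewrite (lextEw h msuppU_le) big_seq_fset1 mcoeffUU scale1r. Qed.

Lemma eq_lext h1 h2 : (forall x, h1 x = h2 x) -> forall g, lext h1 g = lext h2 g.
Proof. by move=> e g; apply: eq_bigr => x _; rewrite e. Qed.

Lemma lext_map (W : lmodType k) (F : V -> W) h g : lin F ->
  F (lext h g) = lext (fun x => F (h x)) g.
Proof. by move=> HF; rewrite /lext lin_sum //; apply: eq_bigr => x _; rewrite linZ. Qed.

Lemma lext_id g : lext (fun x => << x >>) g = g.
Proof.
rewrite {2}(monalgE g) /lext; apply: eq_bigr => x _.
apply/malgP => y; by rewrite mcoeffZ !mcoeffU mulr_natr.
Qed.
End Lext.

Section Span.
Variables (k : fieldType) (V : lmodType k).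
Implicit Types G H : V -> Prop.

Lemma span0 G : Defs.span G 0.
Proof. by exists [::]; rewrite big_nil. Qed.
Lemma span_gen G x : G x -> Defs.span G x.
Proof. by move=> Gx; exists [:: (1, x)]; rewrite big_seq1 scale1r; split=> // p; rewrite inE => /eqP ->. Qed.
Lemma spanZD G a x y : Defs.span G x -> Defs.span G y -> Defs.span G (a *: x + y).
Proof.
move=> [s [Hs ->]] [t [Ht ->]].
exists ([seq (a * p.1, p.2) | p <- s] ++ t); split.
  move=> p; rewrite mem_cat => /orP [/mapP [q qs ->]|pt]; [exact: Hs qs | exact: Ht pt].
rewrite big_cat big_map scaler_sumr. congr (_ + _). apply: eq_bigr => p _. by rewrite scalerA.
Qed.
Lemma spanD G x y : Defs.span G x -> Defs.span G y -> Defs.span G (x + y).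
Proof. by move=> ??; rewrite -[x]scale1r; apply: spanZD. Qed.
Lemma spanZ G a x : Defs.span G x -> Defs.span G (a *: x).
Proof. by move=> ?; rewrite -[_ *: _]addr0; apply: spanZD => //; apply: span0. Qed.
Lemma spanN G x : Defs.span G x -> Defs.span G (- x).
Proof. by move=> ?; rewrite -scaleN1r; apply: spanZ. Qed.
Lemma spanB G x y : Defs.span G x -> Defs.span G y -> Defs.span G (x - y).
Proof. by move=> ??; apply: spanD => //; apply: spanN. Qed.
Lemma span_sum G (I : Type) (s : seq I) (P : pred I) (F : I -> V) :
  (forall i, P i -> Defs.span G (F i)) -> Defs.span G (\sum_(i <- s | P i) F i).
Proof.
move=> HF; elim: s => [|x s IH]; first by rewrite big_nil; apply: span0.
by rewrite big_cons; case Px: (P x) => //; apply: spanD => //; apply: HF.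
Qed.
Lemma span_lext G (K : choiceType) (h : K -> V) g :
  (forall x, Defs.span G (h x)) -> Defs.span G (lext h g).
Proof. by move=> Hh; apply: span_sum => x _; apply: spanZ. Qed.

End Span.
Lemma span_map (k : fieldType) (V : lmodType k) (W : lmodType k) (F : V -> W) (G : V -> Prop) (H : W -> Prop) x : lin F ->
  (forall y, G y -> Defs.span H (F y)) -> Defs.span G x -> Defs.span H (F x).
Proof.
move=> HF HG [s [Hs ->]]; rewrite lin_sum // big_seq; apply: span_sum => p ps.
by rewrite linZ //; apply: spanZ; apply: HG; exact: Hs.
Qed.

Section Basic.
Variables (k : fieldType) (A : lmodType k).
Local Notation FS := (FS A).
Local Notation FT := (FT A).
Local Notation R := (@RelS k A).
Local Notation RT m := (@RelT k A m).

Lemma gT_sz m (w : seq A) (t : seq A) : size t != m -> gT m w t = 0.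
Proof. by move=> h; rewrite /gT insubN. Qed.

Lemma gT_tuple m (w : seq A) (u : m.-tuple A) : gT m w (val u) = << (w, u) >>.
Proof. by rewrite /gT valK. Qed.

Lemma gT_case m (w : seq A) (t : seq A) :
  (exists u : m.-tuple A, t = val u /\ gT m w t = << (w, u) >>) \/
  (size t != m /\ gT m w t = 0).
Proof.
case: (eqVneq (size t) m) => [e|ne]; last by right; rewrite gT_sz.
left; have e' : size t == m by apply/eqP.
by exists (Tuple e'); rewrite -gT_tuple.
Qed.

Lemma tens_right_gT m (a : A) (w t : seq A) :
  tens_right a (gT m w t) = gT m.+1 w (rcons t a).
Proof.
case: (gT_case m w t) => [[u [-> ->]]|[ne ->]].
  by rewrite /tens_right lextU.
rewrite gT_sz ?size_rcons // ?eqSS //.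
rewrite /tens_right /lext msupp0 big_seq_fset0 //.
Qed.

Lemma dfree_gS (w : seq A) : dfree (gS w) =
  \sum_(i < size w) gT 1 (remove_at i w) [:: nth 0 w i].
Proof. by rewrite /dfree /gS lextU. Qed.

Lemma dpow0_gS (w : seq A) : dpow 0 (gS w) = gT 0 w [::].
Proof. by rewrite /= /gS lextU. Qed.

Definition Lr r : FT 1 -> FT r.+1 :=
  lext (fun p : seq A * 1.-tuple A =>
              tens_right (thead p.2) (dpow r (gS p.1))).

Lemma dpowS r x : dpow r.+1 x = Lr r (dfree x).
Proof. by []. Qed.

Lemma Lr_gT r (w : seq A) (a : A) : Lr r (gT 1 w [:: a]) = tens_right a (dpow r (gS w)).
Proof.
have -> : gT 1 w [:: a] = << (w, [tuple a]) >> by exact: (gT_tuple w [tuple a]).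
by rewrite /Lr lextU.
Qed.

Lemma dpow_lin r : lin (@dpow k A r).
Proof.
elim: r => [|r IH]; first exact: lext_lin.
by move=> a x y; rewrite !dpowS; apply: lin_comp; apply: lext_lin.
Qed.

Lemma dpowS_gS r (w : seq A) : dpow r.+1 (gS w) =
  \sum_(i < size w) tens_right (nth 0 w i) (dpow r (gS (remove_at i w))).
Proof.
rewrite dpowS dfree_gS /Lr (lin_sum (lext_lin _)).
by apply: eq_bigr => i _; rewrite -/(Lr r _) Lr_gT.
Qed.

Lemma size_remove_at (T : Type) i (w : seq T) : (i < size w)%N ->
  size (remove_at i w) = (size w).-1.
Proof.
move=> h; rewrite /remove_at size_cat size_take size_drop h.
by case: (size w) h => // n; rewrite ltnS => h'; rewrite subSS addnC subnK.
Qed.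

Lemma dpow_small r (w : seq A) : (size w <= r)%N -> dpow r.+1 (gS w) = 0.
Proof.
elim: r w => [|r IH] w h.
  by rewrite dpowS_gS; move: h; rewrite leqn0 => /eqP ->; rewrite big_ord0.
rewrite dpowS_gS big1 // => i _.
rewrite IH; first by rewrite /tens_right (lin0 (lext_lin _)).
have hw : (0 < size w)%N by apply: leq_ltn_trans (leq0n i) (ltn_ord i).
by rewrite size_remove_at // -ltnS prednK.
Qed.
End Basic.

Section LextH.
Variables (k : fieldType) (K : choiceType) (V : lmodType k).
Implicit Types (h : K -> V) (g : {malg k[K]}).
Lemma lext_hB h1 h2 g : lext (fun x => h1 x - h2 x) g = lext h1 g - lext h2 g.
Proof. by rewrite /lext -sumrB; apply: eq_bigr => x _; rewrite scalerBr. Qed.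
Lemma lext_hD h1 h2 g : lext (fun x => h1 x + h2 x) g = lext h1 g + lext h2 g.
Proof. by rewrite /lext -big_split; apply: eq_bigr => x _; rewrite scalerDr. Qed.
Lemma lext_hZ a h g : lext (fun x => a *: h x) g = a *: lext h g.
Proof. by rewrite /lext scaler_sumr; apply: eq_bigr => x _; rewrite !scalerA mulrC. Qed.
Lemma lext_h0 g : lext (fun x => (0 : V)) g = 0.
Proof. by rewrite /lext big1 // => x _; rewrite scaler0. Qed.
End LextH.

Section Dir1.
Variables (k : fieldType) (A : lmodType k).
Local Notation R := (@RelS k A).
Local Notation RT m := (@RelT k A m).

Unset Implicit Arguments.
Definition mu m : FT A m -> FS A :=
  lext (fun p : seq A * m.-tuple A => gS (p.1 ++ val p.2)).
Definition app (a : A) : FS A -> FS A := lext (fun w : seq A => gS (rcons w a)).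
Definition proj n : FS A -> FS A :=
  lext (fun w : seq A => if size w == n then gS w else 0).

Set Implicit Arguments.
Lemma mu_lin m : lin (mu m). Proof. exact: lext_lin. Qed.
Lemma app_lin a : lin (app a). Proof. exact: lext_lin. Qed.
Lemma proj_lin n : lin (proj n). Proof. exact: lext_lin. Qed.
Arguments mu_lin m : clear implicits.
Arguments app_lin a : clear implicits.
Arguments proj_lin n : clear implicits.

Lemma mu_gT m (w t : seq A) :
  mu m (gT m w t) = if size t == m then gS (w ++ t) else 0.
Proof.
case: (gT_case m w t) => [[u [-> ->]]|[ne ->]].
  by rewrite /mu lextU size_tuple eqxx.
by rewrite (negbTE ne) (lin0 (mu_lin m)).
Qed.
Lemma app_gS a (w : seq A) : app a (gS w) = gS (rcons w a).
Proof. by rewrite /app lextU. Qed.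
Lemma proj_gS n (w : seq A) : proj n (gS w) = if size w == n then gS w else 0.
Proof. by rewrite /proj lextU. Qed.

Lemma mu_rel m x : RT m x -> R (mu m x).
Proof.
move=> H; apply: (span_map (mu_lin m)) H => y
  [[t [u [v [a [b [c ->]]]]]] | [[w [u [v [a [b [c ->]]]]]] | [s [s' [t [hp ->]]]]]].
- rewrite !(linB (mu_lin m)) (linZ (mu_lin m)) !mu_gT.
  case: eqP => _; last by rewrite scaler0 !subr0; apply: span0.
  apply: span_gen; left; exists u, (v ++ t), a, b, c; by rewrite -!catA.
- rewrite !(linB (mu_lin m)) (linZ (mu_lin m)) !mu_gT !size_cat /=.
  case: eqP => _; last by rewrite scaler0 !subr0; apply: span0.
  apply: span_gen; left; exists (w ++ u), v, a, b, c; by rewrite !catA.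
- rewrite !(linB (mu_lin m)) !mu_gT.
  case: eqP => _; last by rewrite subr0; apply: span0.
  apply: span_gen; right; exists (s ++ t), (s' ++ t); split=> //.
  by rewrite perm_cat2r.
Qed.

Lemma app_rel a x : R x -> R (app a x).
Proof.
move=> H; apply: (span_map (app_lin a)) H => y
  [[u [v [a' [b [c ->]]]]] | [s [s' [hp ->]]]].
- rewrite !(linB (app_lin a)) (linZ (app_lin a)) !app_gS.
  apply: span_gen; left; exists u, (rcons v a), a', b, c; by rewrite !rcons_cat.
- rewrite !(linB (app_lin a)) !app_gS.
  apply: span_gen; right; exists (rcons s a), (rcons s' a); split=> //.
  by rewrite perm_rcons perm_sym perm_rcons perm_cons perm_sym.
Qed.

Lemma proj_rel n x : R x -> R (proj n x).
Proof.
move=> H; apply: (span_map (proj_lin n)) H => y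
  [[u [v [a' [b [c ->]]]]] | [s [s' [hp ->]]]].
- rewrite !(linB (proj_lin n)) (linZ (proj_lin n)) !proj_gS !size_cat /=.
  case: eqP => _; last by rewrite scaler0 !subr0; apply: span0.
  apply: span_gen; left; exists u, v, a', b, c; by [].
- rewrite !(linB (proj_lin n)) !proj_gS (perm_size hp).
  case: eqP => _; last by rewrite subr0; apply: span0.
  by apply: span_gen; right; exists s, s'.
Qed.

Lemma mu_tr m a (y : FT A m) : mu m.+1 (tens_right a y) = app a (mu m y).
Proof.
rewrite -[y]lext_id /tens_right (lext_map _ _ (lext_lin _)).
rewrite (lext_map _ _ (mu_lin _)) (lext_map _ _ (mu_lin _)) (lext_map _ _ (app_lin _)).
apply: eq_lext => p; rewrite lextU mu_gT size_rcons size_tuple eqxx.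
by rewrite /mu lextU app_gS rcons_cat.
Qed.
End Dir1.
Arguments mu {k A} m.
Arguments app {k A} a.
Arguments proj {k A} n.
Arguments mu_lin {k A} m.
Arguments app_lin {k A} a.
Arguments proj_lin {k A} n.

Section Key.
Variables (k : fieldType) (A : lmodType k).
Local Notation R := (@RelS k A).
Local Notation RT m := (@RelT k A m).

Lemma perm_remove_at (w : seq A) i : (i < size w)%N ->
  perm_eq (rcons (remove_at i w) (nth 0 w i)) w.
Proof.
move=> h; rewrite perm_rcons /remove_at.
rewrite perm_sym -{1}(cat_take_drop i w) (drop_nth 0 h).
by rewrite perm_catC /= perm_cons perm_catC.
Qed.

Lemma key m (w : seq A) :
  R (mu m (dpow m (gS w)) - ((size w) ^_ m)%:R *: gS w).
Proof.
elim: m w => [|m IH] w.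
  by rewrite dpow0_gS mu_gT /= cats0 ffactn0 scale1r subrr; apply: span0.
rewrite dpowS_gS (lin_sum (mu_lin _)).
under eq_bigr do rewrite mu_tr.
set f := ((size w).-1 ^_ m)%:R : k.
have E : \sum_(i < size w) app (nth 0 w i) (mu m (dpow m (gS (remove_at i w))))
    - ((size w) ^_ m.+1)%:R *: gS w
  = \sum_(i < size w) (app (nth 0 w i) (mu m (dpow m (gS (remove_at i w)))
                         - f *: gS (remove_at i w))
       + f *: (gS (rcons (remove_at i w) (nth 0 w i)) - gS w)).
  rewrite big_split /=.
  under [X in _ = X + _]eq_bigr do rewrite (linB (app_lin _)) (linZ (app_lin _)) app_gS.
  rewrite sumrB -!scaler_sumr sumrB sumr_const card_ord ffactnS natrM -/f.
  by rewrite scalerBr addrA subrK -scaler_nat scalerA mulrC.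
rewrite E; apply: span_sum => i _; apply: spanD.
  apply: app_rel; have := IH (remove_at i w); by rewrite size_remove_at.
apply: spanZ; apply: span_gen; right; exists (rcons (remove_at i w) (nth 0 w i)), w.
by rewrite perm_remove_at.
Qed.

Lemma high_proj r (c : FS A) :
  (forall n, (n%:R == 0 :> k) = (n == 0)%N) ->
  RT r.+1 (dpow r.+1 c) -> forall n, (r < n)%N -> R (proj n c).
Proof.
move=> hc H n hn.
have H1 := mu_rel H.
have E1 : mu r.+1 (dpow r.+1 c) = lext (fun w => mu r.+1 (dpow r.+1 (gS w))) c.
  rewrite -{1}[c]lext_id; exact: (lext_map _ _ (lin_comp (mu_lin _) (@dpow_lin k A r.+1))).
have H2 : R (lext (fun w : seq A => ((size w) ^_ r.+1)%:R *: gS w) c).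
  have := span_lext c (fun w => key r.+1 w).
  rewrite lext_hB -E1 => H3; have := spanB H1 H3; by rewrite subKr.
have H3 := proj_rel n H2.
have E3 : proj n (lext (fun w : seq A => ((size w) ^_ r.+1)%:R *: gS w) c)
          = (n ^_ r.+1)%:R *: proj n c.
  rewrite (lext_map _ _ (proj_lin n)) {2}/proj -lext_hZ; apply: eq_lext => w.
  by rewrite (linZ (proj_lin n)) proj_gS; case: eqP => [->|_]; rewrite ?scaler0.
rewrite E3 in H3.
have nz : (n ^_ r.+1)%:R != 0 :> k by rewrite hc -lt0n ffact_gt0.
have := spanZ ((n ^_ r.+1)%:R^-1) H3; by rewrite scalerA mulVf // scale1r.
Qed.
End Key.

Section Mlr.
Variables (k : fieldType) (A V : lmodType k) (G : V -> Prop).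
Definition mlr (W : V -> Prop) (S : A -> V) :=
  forall c a b, W (S (c *: a + b) - c *: S a - S b).
Local Notation mlrG := (mlr (Defs.span G)).
Lemma mlr_add S1 S2 : mlrG S1 -> mlrG S2 -> mlrG (fun y => S1 y + S2 y).
Proof.
move=> h1 h2 c a b.
have -> : S1 (c *: a + b) + S2 (c *: a + b) - c *: (S1 a + S2 a) - (S1 b + S2 b)
  = (S1 (c *: a + b) - c *: S1 a - S1 b) + (S2 (c *: a + b) - c *: S2 a - S2 b).
  rewrite scalerDr !opprD.
  set p := S1 _; set q := S2 _.
  by rewrite [p + q + _]addrACA [_ + (- S1 b - S2 b)]addrACA.
exact: spanD.
Qed.
Lemma mlr_sum n (S : 'I_n -> A -> V) : (forall i, mlrG (S i)) ->
  mlrG (fun y => \sum_(i < n) S i y).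
Proof.
move=> h c a b; rewrite scaler_sumr -!sumrB; apply: span_sum => i _; exact: h.
Qed.
Lemma mlr_ext S1 S2 : (forall y, S1 y = S2 y) -> mlrG S1 -> mlrG S2.
Proof. by move=> e h c a b; rewrite -!e. Qed.
End Mlr.
Arguments mlr {k A V} W S.

Lemma alg3 (V : zmodType) (d S d' S' : V) :
  d - S + (S - S') + - (d' - S') = d - d'.
Proof. by rewrite opprB !addrA subrK subrK. Qed.

Section Dir2.
Variables (k : fieldType) (A : lmodType k).
Local Notation R := (@RelS k A).
Local Notation RT m := (@RelT k A m).

Lemma tr_lin m (a : A) : lin (@tens_right k A m a). Proof. exact: lext_lin. Qed.
Arguments tr_lin m a : clear implicits.
Lemma dfree_lin : lin (@dfree k A). Proof. exact: lext_lin. Qed.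
Lemma Lr_lin r : lin (@Lr k A r). Proof. exact: lext_lin. Qed.
Arguments Lr_lin r : clear implicits.
Arguments dpow_lin {k A} r.

Lemma tr_rel m a x : RT m x -> RT m.+1 (tens_right a x).
Proof.
move=> H; apply: (span_map (tr_lin m a)) H => y
  [[t [u [v [a' [b [c ->]]]]]] | [[w [u [v [a' [b [c ->]]]]]] | [s [s' [t [hp ->]]]]]] /=.
- rewrite !(linB (tr_lin m a)) (linZ (tr_lin m a)) !tens_right_gT.
  by apply: span_gen; left; exists (rcons t a), u, v, a', b, c.
- rewrite !(linB (tr_lin m a)) (linZ (tr_lin m a)) !tens_right_gT.
  apply: span_gen; right; left; exists w, u, (rcons v a), a', b, c.
  by rewrite !rcons_cat.
- rewrite !(linB (tr_lin m a)) !tens_right_gT.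
  by apply: span_gen; right; right; exists s, s', (rcons t a).
Qed.

Lemma tr_ml m (Y : FT A m) (a b : A) (c : k) :
  RT m.+1 (tens_right (c *: a + b) Y - c *: tens_right a Y - tens_right b Y).
Proof.
rewrite -[Y]lext_id !(lext_map _ _ (tr_lin _ _)) -lext_hZ -!lext_hB.
apply: span_lext => p; rewrite /tens_right !lextU.
apply: span_gen; right; left; exists p.1, (val p.2), [::], a, b, c. rewrite !cats1. reflexivity.
Qed.

Lemma remove_at_cat (T : Type) i (s1 s2 : seq T) :
  remove_at i (s1 ++ s2) =
  if (i < size s1)%N then remove_at i s1 ++ s2 else s1 ++ remove_at (i - size s1) s2.
Proof.
rewrite /remove_at take_cat drop_cat; case: (ltnP i (size s1)) => h1.
  case: (ltnP i.+1 (size s1)) => h2; first by rewrite catA.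
  have e : i.+1 = size s1 by apply/eqP; rewrite eqn_leq h1 h2.
  by rewrite e subnn drop0 (drop_oversize (leqnn _)) cats0.
have h2 : (i.+1 < size s1)%N = false by apply/negbTE; rewrite -leqNgt; apply: (leq_trans h1).
by rewrite h2 subSn // catA.
Qed.

Lemma dfree_split (u v : seq A) y : dfree (gS (u ++ y :: v)) =
  \sum_(i < size u) gT 1 (remove_at i u ++ y :: v) [:: nth 0 u i]
  + gT 1 (u ++ v) [:: y]
  + \sum_(j < size v) gT 1 (u ++ y :: remove_at j v) [:: nth 0 v j].
Proof.
rewrite dfree_gS.
have e : size (u ++ y :: v) = (size u + (size v).+1)%N by rewrite size_cat.
rewrite e big_split_ord big_ord_recl /=.
under eq_bigr => i _ do rewrite /= remove_at_cat nth_cat ltn_ord.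
under [X in _ + (_ + X)]eq_bigr => j _ do
  rewrite remove_at_cat nth_cat ltnNge leq_addr /= addKn /bump /= add1n.
rewrite /= addn0 remove_at_cat nth_cat ltnn subnn addrA.
have -> : remove_at 0 (y :: v) = v by rewrite /remove_at /= drop0.
congr (_ + _); apply: eq_bigr => j _; rewrite add0n.
Qed.

Lemma dfree_rem (s : seq A) :
  RT 1 (dfree (gS s) - \sum_(x <- s) gT 1 (rem x s) [:: x]).
Proof.
rewrite dfree_gS (big_nth 0) big_mkord -sumrB; apply: span_sum => i _.
apply: span_gen; right; right.
exists (remove_at i s), (rem (nth 0 s i) s), [:: nth 0 s i]; split => //.
have h1 : perm_eq (nth 0 s i :: remove_at i s) s by rewrite -perm_rcons perm_remove_at.
have h2 := perm_to_rem (mem_nth 0 (ltn_ord i)).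
by rewrite -(perm_cons (nth 0 s i)); apply: perm_trans h1 h2.
Qed.

Lemma dfree_rel x : R x -> RT 1 (dfree x).
Proof.
move=> H; apply: (span_map dfree_lin) H => y
  [[u [v [a [b [c ->]]]]] | [s [s' [hp ->]]]].
- rewrite !(linB dfree_lin) (linZ dfree_lin).
  pose S y := dfree (gS (u ++ y :: v)).
  suff : mlr (RT 1) S by move/(_ c a b).
  apply: (mlr_ext (S1 := fun y => 
     \sum_(i < size u) gT 1 (remove_at i u ++ y :: v) [:: nth 0 u i]
     + gT 1 (u ++ v) [:: y]
     + \sum_(j < size v) gT 1 (u ++ y :: remove_at j v) [:: nth 0 v j])).
    by move=> y'; rewrite /S dfree_split.
  apply: mlr_add; first apply: mlr_add.
  + apply: mlr_sum => i c' a' b'; apply: span_gen; left.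
    by exists [:: nth 0 u i], (remove_at i u), v, a', b', c'.
  + move=> c' a' b'; apply: span_gen; right; left.
    by exists (u ++ v), [::], [::], a', b', c'.
  + apply: mlr_sum => j c' a' b'; apply: span_gen; left.
    by exists [:: nth 0 v j], u, (remove_at j v), a', b', c'.
- rewrite (linB dfree_lin).
  have e1 := dfree_rem s; have e2 := dfree_rem s'.
  have e3 : RT 1 (\sum_(x <- s) gT 1 (rem x s) [:: x] - \sum_(x <- s') gT 1 (rem x s') [:: x]).
    rewrite -(perm_big _ hp) /= big_seq [X in _ - X]big_seq -sumrB.
    apply: span_sum => z zs; apply: span_gen; right; right.
    exists (rem z s), (rem z s'), [:: z]; split => //.
    have zs' : z \in s' by rewrite -(perm_mem hp).
    have h1 : perm_eq (z :: rem z s) s by rewrite perm_sym; exact: perm_to_rem.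
    rewrite -(perm_cons z); exact: perm_trans h1 (perm_trans hp (perm_to_rem zs')).
  have := spanD (spanD e1 e3) (spanN e2).
  congr (Defs.span _ _).
  by rewrite alg3.
Qed.
End Dir2.

Section Dir3.
Variables (k : fieldType) (A : lmodType k).
Local Notation R := (@RelS k A).
Local Notation RT m := (@RelT k A m).
Arguments dpow_lin {k A} r.

Lemma Lr_rel r (IH : forall x, R x -> RT r (dpow r x)) y :
  RT 1 y -> RT r.+1 (Lr r y).
Proof.
move=> H; apply: (span_map (@Lr_lin k A r)) H => z
  [[t [u [v [a [b [c ->]]]]]] | [[w [u [v [a [b [c ->]]]]]] | [s [s' [t [hp ->]]]]]] /=.
- rewrite !(linB (@Lr_lin k A r)) (linZ (@Lr_lin k A r)).
  case: t => [|a0 [|a1 t]]; first (rewrite !gT_sz // !(lin0 (@Lr_lin k A r)) scaler0 !subr0; apply: span0);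
    last (rewrite !gT_sz // !(lin0 (@Lr_lin k A r)) scaler0 !subr0; apply: span0).
  rewrite !Lr_gT -(linZ (@tr_lin k A _ _)) -!(linB (@tr_lin k A _ _)).
  rewrite -(linZ (dpow_lin r)) -!(linB (dpow_lin r)).
  apply: tr_rel; apply: IH; apply: span_gen; left; exists u, v, a, b, c.
  reflexivity.
- rewrite !(linB (@Lr_lin k A r)) (linZ (@Lr_lin k A r)).
  case: u => [|u0 u]; case: v => [|v0 v].
  + rewrite /= !Lr_gT; exact: tr_ml.
  + rewrite !gT_sz // !(lin0 (@Lr_lin k A r)) scaler0 !subr0; apply: span0.
  + rewrite !gT_sz ?size_cat //= ?addnS // !(lin0 (@Lr_lin k A r)) scaler0 !subr0; apply: span0.
  + rewrite !gT_sz ?size_cat //= ?addnS // !(lin0 (@Lr_lin k A r)) scaler0 !subr0; apply: span0.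
- rewrite !(linB (@Lr_lin k A r)).
  case: t => [|a0 [|a1 t]]; first (rewrite !gT_sz // !(lin0 (@Lr_lin k A r)) subr0; apply: span0);
    last (rewrite !gT_sz // !(lin0 (@Lr_lin k A r)) subr0; apply: span0).
  rewrite !Lr_gT -(linB (@tr_lin k A _ _)) -(linB (dpow_lin r)).
  apply: tr_rel; apply: IH; apply: span_gen; right; exists s, s'; split; [exact: hp | reflexivity].
Qed.

Lemma dpow_rel r x : R x -> RT r (dpow r x).
Proof.
elim: r x => [|r IH] x H.
  apply: (span_map (dpow_lin 0)) H => y [[u [v [a [b [c ->]]]]] | [s [s' [hp ->]]]].
  - rewrite !(linB (dpow_lin 0)) (linZ (dpow_lin 0)) !dpow0_gS.
    apply: span_gen; left; exists [::], u, v, a, b, c; reflexivity.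
  - rewrite (linB (dpow_lin 0)) !dpow0_gS.
    apply: span_gen; right; right; exists s, s', [::]; split; [exact: hp | reflexivity].
rewrite dpowS; apply: Lr_rel => //; exact: dfree_rel.
Qed.
End Dir3.

Section Quot.
Variables (k : fieldType) (V : lmodType k) (G : V -> Prop).
Local Notation W := (Defs.span G).

Lemma coset_eq (x y : V) : W (x - y) -> coset W x = coset W y.
Proof.
move=> h; apply: functional_extensionality => z; apply: propositional_extensionality.
rewrite /coset; split => hz.
  have -> : z - y = (z - x) + (x - y) by rewrite addrA subrK.
  exact: spanD.
have -> : z - x = (z - y) - (x - y) by rewrite opprB addrA subrK.
exact: spanB.
Qed.

Lemma qpi_eq (x y : V) : W (x - y) -> qpi W x = qpi W y.
Proof. by move=> h; rewrite /qpi; apply: subset_eq_compat; apply: coset_eq. Qed.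

Lemma qpi_inj (x y : V) : qpi W x = qpi W y -> W (x - y).
Proof.
move=> e; have e' := f_equal (fun C : quot W => proj1_sig C x) e.
rewrite /= /coset subrr in e'; rewrite -e'; exact: span0.
Qed.

Lemma qreprK (C : quot W) : qpi W (qrepr C) = C.
Proof.
case: C => C0 HC; rewrite /qrepr /=.
case: (constructive_indefinite_description _ HC) => x hx /=.
rewrite /qpi; apply: subset_eq_compat; by rewrite hx.
Qed.
End Quot.

Lemma lext_hsum (k : fieldType) (K : choiceType) (V : lmodType k) (I : Type)
  (s : seq I) (h : I -> K -> V) g :
  lext (fun x => \sum_(n <- s) h n x) g = \sum_(n <- s) lext (h n) g.
Proof.
elim: s => [|n s IH]; first by rewrite big_nil /lext big1 // => x _; rewrite big_nil scaler0.
by rewrite big_cons -IH -lext_hD; apply: eq_lext => x; rewrite big_cons.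
Qed.

Lemma sum_if_eq (V : zmodType) (N s : nat) (X : V) :
  \sum_(0 <= n < N) (if s == n then X else 0) = if (s < N)%N then X else 0.
Proof.
elim: N => [|N IH]; first by rewrite big_geq.
rewrite big_nat_recr //= IH; case: (ltngtP s N) => h.
- by rewrite addr0 ltnS (ltnW h).
- by rewrite addr0 ltnS leqNgt h.
- by rewrite h ltnSn add0r.
Qed.

Lemma addKr2 (V : zmodType) (a b : V) : a + b - a = b.
Proof. by rewrite addrC addKr. Qed.

Section Main.
Variables (k : fieldType) (A : lmodType k).
Local Notation R := (@RelS k A).
Local Notation RT m := (@RelT k A m).

Lemma dpow_vanish r i y : (i <= r)%N ->
  Defs.span (fun y => exists w : seq A, size w = i /\ y = gS w) y ->
  dpow r.+1 y = 0.
Proof.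
move=> hi [s [hs ->]]; rewrite (lin_sum (@dpow_lin k A r.+1)) big_seq big1 // => p ps.
have [w [hw ->]] := hs p ps.
by rewrite (linZ (@dpow_lin k A r.+1)) dpow_small ?hw // scaler0.
Qed.
End Main.


Theorem proposition7p3 (k : fieldType) (A : lmodType k) :
  [pchar k]%R =i pred0 ->
  forall (r : nat) (C : SA A), S_le r C <-> S_sum r C.
Proof.
move=> hchar r C; have hc := (GRing.pcharf0P k).1 hchar.
split.
- move=> hle; set c := qrepr C.
  have H : @RelT k A r.+1 (dpow r.+1 c).
    have := qpi_inj hle; by rewrite subr0.
  have Hp := high_proj hc H.
  exists (fun i : 'I_r.+1 => proj i c); split.
    move=> i; exists (proj i c); split => //.
    rewrite /proj; apply: span_lext => w; case: eqP => [e|_]; last exact: span0.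
    by apply: span_gen; exists w.
  rewrite -[C]qreprK -/c; apply: qpi_eq.
  pose N := maxn r.+1 (\max_(w <- msupp c) size w).+1.
  have Ec : c = \sum_(0 <= n < N) proj n c.
    rewrite -lext_hsum -{1}[c]lext_id /lext big_seq [in RHS]big_seq.
    apply: eq_bigr => w hw; congr (_ *: _); rewrite sum_if_eq.
    have -> : (size w < N)%N.
      apply: leq_trans (leq_maxr _ _); rewrite ltnS.
      by apply: leq_bigmax_seq.
    by [].
  rewrite {1}Ec (@big_cat_nat _ _ _ r.+1 0 N _ _ (leq0n _) (leq_maxl _ _)) /= big_mkord addKr2.
  rewrite big_nat_cond; apply: span_sum => n /andP [/andP [h1 _] _]; exact: Hp.
- move=> [x [hx ->]]; rewrite /S_le /partial_pow; apply: qpi_eq; rewrite subr0.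
  set c := qrepr _.
  have hc0 : @RelS k A (c - \sum_(i < r.+1) x i) by apply: qpi_inj; rewrite qreprK.
  rewrite -[c](subrK (\sum_(i < r.+1) x i)) (linD (@dpow_lin k A r.+1)).
  apply: spanD; first exact: dpow_rel.
  rewrite (lin_sum (@dpow_lin k A r.+1)); apply: span_sum => i _.
  have [y [hy e]] := hx i.
  have hxy : @RelS k A (x i - y) by apply: qpi_inj.
  rewrite -[x i](subrK y) (linD (@dpow_lin k A r.+1)) (dpow_vanish _ hy).
    by rewrite addr0; apply: dpow_rel.
  by rewrite -ltnS.
Qed.
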